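(* Let $\delta\in[1/3,1]$, let $\nu_-,\nu_+>0$ be fixed constants and $a_\pm=\left(\frac{(1+\delta^2)\delta}{8\nu_\pm^2}\right)^{2/5}$. Consider the fourth-order ODE $$\frac{d^{4}\overline{A_0}}{dz^{4}}=-\overline{A_0}\,(\overline{A_0}^{2}+z)$$ with data at $z=a_+$ given, for a parameter $(\overline{x_{10}},\overline{x_{20}})\in\mathbb{R}^2$, by $$\overline{A_0}=a_+^{1/2}\overline{x_{10}},\quad \overline{A_0}'=-\frac{a_+^{3/4}}{\sqrt2}(\overline{x_{10}}+\overline{x_{20}}),\quad \overline{A_0}''=a_+\overline{x_{20}},\quad \overline{A_0}'''=\frac{a_+^{5/4}}{\sqrt2}(\overline{x_{10}}-\overline{x_{20}}).$$ Then for $k_1>0$ small enough and $|(\overline{x_{10}},\overline{x_{20}})|\le k_1$, the corresponding solutions exist on the whole interval $z\in[-a_-,a_+]$, forming a 2-parameter family (parameter $(\overline{x_{10}},\overline{x_{20}})$); these solutions depend analytically on $\delta\in[1/3,1]$. *)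

(* Defs.v *)
From Stdlib Require Import Reals Lra.
From Coquelicot Require Import Coquelicot.
Open Scope R_scope.

Definition a_pm (delta nu : R) : R :=
  Rpower ((1 + delta ^ 2) * delta / (8 * nu ^ 2)) (2 / 5).

Definition analytic_at (g : R -> R) (x0 : R) : Prop :=
  exists r : R, 0 < r /\
  exists c : nat -> R,
    forall x : R, Rabs (x - x0) < r -> is_pseries c (x - x0) (g x).

Definition solves_ODE_on (A : R -> R) (lo hi : R) : Prop :=
  (exists eps : R, 0 < eps /\
     forall z : R, lo - eps < z < hi + eps ->
       forall k : nat, (k <= 4)%nat -> ex_derive_n A k z) /\
  (forall z : R, lo <= z <= hi ->
     Derive_n A 4 z = - A z * (A z ^ 2 + z)).

Definition initial_data (A : R -> R) (a x1 x2 : R) : Prop :=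
  A a = Rpower a (1/2) * x1 /\
  Derive_n A 1 a = - (Rpower a (3/4) / sqrt 2) * (x1 + x2) /\
  Derive_n A 2 a = a * x2 /\
  Derive_n A 3 a = (Rpower a (5/4) / sqrt 2) * (x1 - x2).

(* Main.v *)
Require Import Defs.
From Stdlib Require Import Reals Lra Lia ZArith.
From Coquelicot Require Import Coquelicot.
Open Scope R_scope.

Lemma series_is_lim (a : nat -> R) : ex_series a ->
  is_lim_seq (fun N => sum_f_R0 a N) (Series a).
Proof.
  intros H. apply is_lim_seq_Reals. apply is_series_Reals. now apply Series_correct.
Qed.

Lemma series_ge_partial (a : nat -> R) N : (forall n, 0 <= a n) -> ex_series a ->
  sum_f_R0 a N <= Series a.
Proof.
  intros Hp He.
  assert (Hl := series_is_lim a He).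
  assert (Rbar_le (sum_f_R0 a N) (Series a)).
  { apply is_lim_seq_le_loc with (u := fun _ => sum_f_R0 a N) (v := fun M => sum_f_R0 a M).
    - exists N. intros M HM. induction HM. lra. simpl. specialize (Hp (S m)). lra.
    - apply is_lim_seq_const.
    - exact Hl. }
  exact H.
Qed.

Lemma series_nonneg (a : nat -> R) : (forall n, 0 <= a n) -> ex_series a -> 0 <= Series a.
Proof.
  intros Hp He. eapply Rle_trans; [|apply (series_ge_partial a 0 Hp He)]. simpl. apply Hp.
Qed.

Lemma series_bounded (a : nat -> R) M : (forall n, 0 <= a n) ->
  (forall N, sum_f_R0 a N <= M) -> ex_series a /\ Series a <= M.
Proof.
  intros Hp HM.
  assert (Hex : ex_finite_lim_seq (fun N => sum_f_R0 a N)).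
  { apply ex_finite_lim_seq_incr with M; auto. intros n; simpl. specialize (Hp (S n)); lra. }
  destruct Hex as [l Hl].
  assert (Hs : is_series a l).
  { apply is_series_Reals. apply is_lim_seq_Reals. exact Hl. }
  split. exists l; exact Hs.
  rewrite (is_series_unique a l Hs).
  assert (Rbar_le l M).
  { apply is_lim_seq_le with (u := fun N => sum_f_R0 a N) (v := fun _ => M); auto.
    apply is_lim_seq_const. }
  exact H.
Qed.

Lemma ex_series_le_R (a b : nat -> R) : (forall n, Rabs (a n) <= b n) -> ex_series b -> ex_series a.
Proof. intros H Hb. apply (ex_series_le a b); auto. Qed.

Lemma series_le_gen (a b : nat -> R) : (forall n, Rabs (a n) <= b n) -> ex_series b ->
  ex_series a /\ Rabs (Series a) <= Series b.
Proof.
  intros H Hb.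
  assert (Ha : ex_series (fun n => Rabs (a n))).
  { apply (ex_series_le_R (fun n => Rabs (a n)) b); auto. intros n. rewrite Rabs_Rabsolu. auto. }
  split. now apply ex_series_Rabs.
  eapply Rle_trans. apply Series_Rabs; auto.
  apply Series_le; auto. intros n; split; auto. apply Rabs_pos.
Qed.

Lemma series_sum_f (a : nat -> nat -> R) K : (forall k, ex_series (fun n => a n k)) ->
  ex_series (fun n => sum_f_R0 (fun k => a n k) K) /\
  Series (fun n => sum_f_R0 (fun k => a n k) K) = sum_f_R0 (fun k => Series (fun n => a n k)) K.
Proof.
  intros H. induction K as [|K [IH1 IH2]]; simpl.
  - split; auto.
  - split. apply (ex_series_plus (fun n => sum_f_R0 (fun k => a n k) K) (fun n => a n (S K))); auto.
    rewrite Series_plus; auto. now rewrite IH2.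
Qed.

Lemma sum_f_le (f g : nat -> R) N : (forall k, f k <= g k) -> sum_f_R0 f N <= sum_f_R0 g N.
Proof. intros H; induction N; simpl; auto. specialize (H (S N)); lra. Qed.

Lemma sum_f_nonneg (f : nat -> R) N : (forall k, 0 <= f k) -> 0 <= sum_f_R0 f N.
Proof. intros H; induction N; simpl; auto. specialize (H (S N)); lra. Qed.

Lemma fubini_pos (a : nat -> nat -> R) : (forall n k, 0 <= a n k) ->
  (forall n, ex_series (a n)) -> ex_series (fun n => Series (a n)) ->
  (forall k, ex_series (fun n => a n k)) /\ ex_series (fun k => Series (fun n => a n k)) /\
  Series (fun k => Series (fun n => a n k)) = Series (fun n => Series (a n)).
Proof.
  intros Hp Hr Hs.
  assert (Hc : forall k, ex_series (fun n => a n k)).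
  { intros k. apply (ex_series_le_R (fun n => a n k) (fun n => Series (a n))); auto.
    intros n. rewrite Rabs_pos_eq; auto.
    eapply Rle_trans; [|apply (series_ge_partial (a n) k (Hp n) (Hr n))].
    destruct k; simpl. lra. assert (0 <= sum_f_R0 (a n) k) by (apply sum_f_nonneg; auto). lra. }
  assert (Hcp : forall k, 0 <= Series (fun n => a n k)).
  { intros k. apply series_nonneg; auto. }
  destruct (series_bounded (fun k => Series (fun n => a n k)) (Series (fun n => Series (a n))) Hcp) as [He Hle].
  { intros N. destruct (series_sum_f a N Hc) as [_ E]. rewrite <- E.
    apply Series_le; auto. intros n; split. apply sum_f_nonneg; auto.
    apply series_ge_partial; auto. }
  split; auto. split; auto.
  apply Rle_antisym; auto.
  assert (Hsp : forall n, 0 <= Series (a n)) by (intros; apply series_nonneg; auto).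
  destruct (series_bounded (fun n => Series (a n)) (Series (fun k => Series (fun n => a n k))) Hsp) as [_ H2]; auto.
  intros N.
  destruct (series_sum_f (fun x y => a y x) N Hr) as [_ E]. simpl in E.
  apply Rle_trans with (Series (fun n => sum_f_R0 (fun k => a k n) N)). right; symmetry; exact E.
  apply Series_le; auto. intros k; split. apply sum_f_nonneg; auto.
  apply (series_ge_partial (fun n => a n k)); auto.
Qed.

Lemma tail_eq (a : nat -> R) K : ex_series a ->
  Series a - sum_f_R0 a K = Series (fun k => a (S K + k)%nat).
Proof.
  intros H. rewrite (Series_incr_n a (S K)); [|lia|auto]. simpl pred. ring.
Qed.

Lemma fubini (a : nat -> nat -> R) :
  (forall n, ex_series (fun k => Rabs (a n k))) ->
  ex_series (fun n => Series (fun k => Rabs (a n k))) ->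
  (forall k, ex_series (fun n => a n k)) /\ ex_series (fun k => Series (fun n => a n k)) /\
  Series (fun k => Series (fun n => a n k)) = Series (fun n => Series (a n)).
Proof.
  intros Hr Hs.
  set (p := fun n k => Rabs (a n k)).
  destruct (fubini_pos p) as [Hcp [Hep Eqp]]; auto.
  { intros; apply Rabs_pos. }
  assert (Hca : forall k, ex_series (fun n => a n k)).
  { intros k. apply (ex_series_le_R _ (fun n => p n k)); auto. intros; apply Rle_refl. }
  assert (Hra : forall n, ex_series (a n)).
  { intros n. apply ex_series_Rabs. apply Hr. }
  assert (Hb : forall k, Rabs (Series (fun n => a n k)) <= Series (fun n => p n k)).
  { intros k. apply (series_le_gen (fun n => a n k) (fun n => p n k)); auto. intros; apply Rle_refl. }
  assert (Heb : ex_series (fun k => Series (fun n => a n k))).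
  { apply (ex_series_le_R _ (fun k => Series (fun n => p n k))); auto. }
  assert (HX : ex_series (fun n => Series (a n))).
  { apply (ex_series_le_R _ (fun n => Series (p n))); auto.
    intros n. apply (series_le_gen (a n) (p n)). intros; apply Rle_refl. apply Hr. }
  split; auto. split; auto.
  set (X := Series (fun n => Series (a n))).
  set (T := Series (fun n => Series (p n))).
  assert (Hbound : forall K, Rabs (X - sum_f_R0 (fun k => Series (fun n => a n k)) K) <=
                            T - sum_f_R0 (fun k => Series (fun n => p n k)) K).
  { intros K.
    destruct (series_sum_f a K Hca) as [E1 E2].
    destruct (series_sum_f p K Hcp) as [F1 F2].
    rewrite <- E2, <- F2. unfold X, T.
    rewrite <- Series_minus; auto. rewrite <- Series_minus; auto.
    apply (series_le_gen (fun n => Series (a n) - sum_f_R0 (fun k => a n k) K)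
              (fun n => Series (p n) - sum_f_R0 (fun k => p n k) K)).
    - intros n. change (fun k => a n k) with (a n). change (fun k => p n k) with (p n).
      rewrite (tail_eq (a n)) by apply Hra. rewrite (tail_eq (p n)) by apply Hr.
      apply (series_le_gen (fun k => a n (S K + k)%nat) (fun k => p n (S K + k)%nat)).
      intros; apply Rle_refl.
      apply (ex_series_incr_n (p n) (S K)). apply Hr.
    - apply (ex_series_minus (fun n => Series (p n)) (fun n => sum_f_R0 (fun k => p n k) K)); auto. }
  assert (L1 := series_is_lim _ Heb).
  assert (L2 := series_is_lim _ Hep).
  rewrite Eqp in L2. fold T in L2.
  assert (L3 : is_lim_seq (fun K => Rabs (X - sum_f_R0 (fun k => Series (fun n => a n k)) K))
                 (Rabs (X - Series (fun k => Series (fun n => a n k))))).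
  { apply (is_lim_seq_abs _ (Finite (X - Series (fun k => Series (fun n => a n k))))).
    apply (is_lim_seq_minus' (fun _ => X)). apply is_lim_seq_const. exact L1. }
  assert (L4 : is_lim_seq (fun K => T - sum_f_R0 (fun k => Series (fun n => p n k)) K) (T - T)).
  { apply (is_lim_seq_minus' (fun _ => T)). apply is_lim_seq_const. exact L2. }
  assert (Hle := is_lim_seq_le _ _ _ _ Hbound L3 L4). simpl in Hle.
  assert (Rabs (X - Series (fun k => Series (fun n => a n k))) = 0).
  { apply Rle_antisym. lra. apply Rabs_pos. }
  apply Rabs_eq_0 in H. fold X. lra.
Qed.

Definition AC (r : R) (f : nat -> R) := ex_series (fun k => Rabs (f k) * r ^ k).
Definition nrm (r : R) (f : nat -> R) := Series (fun k => Rabs (f k) * r ^ k).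
Definition padd (f g : nat -> R) : nat -> R := fun k => f k + g k.
Definition psc (c : R) (f : nat -> R) : nat -> R := fun k => c * f k.
Definition pzero : nat -> R := fun _ => 0.
Definition pconst (c : R) : nat -> R := fun k => match k with O => c | _ => 0 end.
Definition pX : nat -> R := fun k => match k with 1%nat => 1 | _ => 0 end.

Lemma sum_f_le_bnd (f g : nat -> R) N : (forall k, (k <= N)%nat -> f k <= g k) ->
  sum_f_R0 f N <= sum_f_R0 g N.
Proof.
  intros H; induction N; simpl. apply H; lia.
  assert (sum_f_R0 f N <= sum_f_R0 g N) by (apply IHN; intros; apply H; lia).
  assert (f (S N) <= g (S N)) by (apply H; lia). lra.
Qed.

Lemma series_finite (f : nat -> R) N : (forall k, (N < k)%nat -> f k = 0) ->
  is_series f (sum_f_R0 f N).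
Proof.
  intros H. apply is_series_Reals. intros eps Heps. exists N. intros n Hn.
  assert (sum_f_R0 f n = sum_f_R0 f N).
  { induction Hn; auto. simpl. rewrite IHHn. rewrite H; [ring|lia]. }
  rewrite H0. unfold Rdist. rewrite Rminus_diag, Rabs_R0. lra.
Qed.

Lemma series_finite' (f : nat -> R) N l : (forall k, (N < k)%nat -> f k = 0) ->
  sum_f_R0 f N = l -> is_series f l.
Proof. intros H E; rewrite <- E; apply series_finite; auto. Qed.

Section Alg.
Variable r : R.
Hypothesis Hr : 0 < r.

Lemma term_nonneg f k : 0 <= Rabs (f k) * r ^ k.
Proof. apply Rmult_le_pos. apply Rabs_pos. apply pow_le; lra. Qed.

Lemma nrm_nonneg f : AC r f -> 0 <= nrm r f.
Proof. intros H. apply series_nonneg; auto. intros; apply term_nonneg. Qed.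

Lemma AC_add f g : AC r f -> AC r g -> AC r (padd f g) /\ nrm r (padd f g) <= nrm r f + nrm r g.
Proof.
  intros Hf Hg.
  assert (E : ex_series (fun k => Rabs (f k) * r ^ k + Rabs (g k) * r ^ k)).
  { apply (ex_series_plus (fun k => Rabs (f k) * r ^ k) (fun k => Rabs (g k) * r ^ k)); auto. }
  assert (B : forall k, Rabs (Rabs (padd f g k) * r ^ k) <= Rabs (f k) * r ^ k + Rabs (g k) * r ^ k).
  { intros k. rewrite Rabs_pos_eq by (apply Rmult_le_pos; [apply Rabs_pos|apply pow_le; lra]). unfold padd.
    rewrite <- Rmult_plus_distr_r. apply Rmult_le_compat_r. apply pow_le; lra. apply Rabs_triang. }
  destruct (series_le_gen _ _ B E) as [H1 H2]. split; auto.
  unfold nrm. rewrite <- Series_plus; auto.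
  eapply Rle_trans; [|exact H2]. apply Rle_abs.
Qed.

Lemma AC_sc c f : AC r f -> AC r (psc c f) /\ nrm r (psc c f) = Rabs c * nrm r f.
Proof.
  intros Hf. unfold AC, nrm, psc.
  assert (E : forall k, Rabs (c * f k) * r ^ k = Rabs c * (Rabs (f k) * r ^ k)).
  { intros; rewrite Rabs_mult; ring. }
  split. eapply ex_series_ext. intros k; symmetry; apply E.
  apply (ex_series_scal_l (Rabs c) (fun k => Rabs (f k) * r ^ k)); auto.
  rewrite (Series_ext _ _ E). apply Series_scal_l.
Qed.

Lemma AC_mul f g : AC r f -> AC r g -> AC r (PS_mult f g) /\ nrm r (PS_mult f g) <= nrm r f * nrm r g.
Proof.
  intros Hf Hg.
  set (al := fun k => Rabs (f k) * r ^ k). set (be := fun k => Rabs (g k) * r ^ k).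
  assert (Ha : forall k, Rabs (al k) = al k) by (intros; apply Rabs_pos_eq, term_nonneg).
  assert (Hb : forall k, Rabs (be k) = be k) by (intros; apply Rabs_pos_eq, term_nonneg).
  assert (Hm : is_series (fun n => sum_f_R0 (fun k => al k * be (n - k)%nat) n) (nrm r f * nrm r g)).
  { apply is_series_mult.
    - apply Series_correct; auto.
    - apply Series_correct; auto.
    - eapply ex_series_ext; [intros; symmetry; apply Ha|]; auto.
    - eapply ex_series_ext; [intros; symmetry; apply Hb|]; auto. }
  assert (B : forall n, Rabs (Rabs (PS_mult f g n) * r ^ n) <= sum_f_R0 (fun k => al k * be (n - k)%nat) n).
  { intros n. rewrite Rabs_pos_eq by (apply Rmult_le_pos; [apply Rabs_pos|apply pow_le; lra]). unfold PS_mult.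
    eapply Rle_trans. apply Rmult_le_compat_r. apply pow_le; lra. apply sum_f_R0_triangle.
    rewrite Rmult_comm, scal_sum. apply sum_f_le_bnd. intros k Hk. unfold al, be.
    replace (r ^ n) with (r ^ k * r ^ (n - k)) by (rewrite <- pow_add; f_equal; lia).
    rewrite Rabs_mult. right; ring. }
  destruct (series_le_gen _ _ B (ex_intro _ _ Hm)) as [H1 H2]. split; auto.
  rewrite (is_series_unique _ _ Hm) in H2.
  eapply Rle_trans; [|exact H2]. apply Rle_abs.
Qed.

Lemma AC_const c : AC r (pconst c) /\ nrm r (pconst c) = Rabs c.
Proof.
  assert (H : is_series (fun k => Rabs (pconst c k) * r ^ k) (Rabs c)).
  { apply (series_finite' _ 0). 2:(simpl; ring). intros k Hk. destruct k. lia. simpl. rewrite Rabs_R0; ring. }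
  split. eexists; eauto. apply is_series_unique; auto.
Qed.

Lemma AC_X : AC r pX /\ nrm r pX = r.
Proof.
  assert (H : is_series (fun k => Rabs (pX k) * r ^ k) r).
  { apply (series_finite' _ 1). 2:(simpl; rewrite Rabs_R0, Rabs_R1; ring). intros k Hk. destruct k as [|[|k]]; try lia. simpl. rewrite Rabs_R0; ring. }
  split. eexists; eauto. apply is_series_unique; auto.
Qed.

Lemma AC_zero : AC r pzero /\ nrm r pzero = 0.
Proof.
  assert (H : is_series (fun k => Rabs (pzero k) * r ^ k) 0).
  { apply (series_finite' _ 0). 2:(simpl; unfold pzero; rewrite Rabs_R0; ring). intros k Hk. unfold pzero. rewrite Rabs_R0; ring. }
  split. eexists; eauto. apply is_series_unique; auto.
Qed.

Lemma AC_radius f x : AC r f -> Rabs x < r -> Rbar_lt (Rabs x) (CV_radius f).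
Proof.
  intros Hf Hx.
  destruct (CV_radius_bounded f) as [Hub _].
  assert (Rbar_le r (CV_radius f)).
  { apply Hub. exists (nrm r f). intros n.
    rewrite Rabs_mult, (Rabs_pos_eq (r ^ n)) by (apply pow_le; lra).
    eapply Rle_trans; [|apply (series_ge_partial _ n); auto].
    destruct n; simpl. lra. assert (0 <= sum_f_R0 (fun k => Rabs (f k) * r ^ k) n).
    apply sum_f_nonneg; intros; apply term_nonneg. simpl in H. lra.
    intros; apply term_nonneg. }
  destruct (CV_radius f); simpl in *; auto. lra.
Qed.

Lemma ev_bound f x : AC r f -> Rabs x <= r -> Rabs (PSeries f x) <= nrm r f.
Proof.
  intros Hf Hx. unfold PSeries.
  apply (series_le_gen (fun k => f k * x ^ k) (fun k => Rabs (f k) * r ^ k)); auto.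
  intros k. rewrite Rabs_mult, <- RPow_abs. apply Rmult_le_compat_l. apply Rabs_pos.
  apply pow_incr. split; auto. apply Rabs_pos.
Qed.

Lemma ev_ex f x : AC r f -> Rabs x <= r -> ex_series (fun k => f k * x ^ k).
Proof.
  intros Hf Hx.
  apply (series_le_gen (fun k => f k * x ^ k) (fun k => Rabs (f k) * r ^ k)); auto.
  intros k. rewrite Rabs_mult, <- RPow_abs. apply Rmult_le_compat_l. apply Rabs_pos.
  apply pow_incr. split; auto. apply Rabs_pos.
Qed.

Lemma ev_add f g x : AC r f -> AC r g -> Rabs x <= r ->
  PSeries (padd f g) x = PSeries f x + PSeries g x.
Proof.
  intros Hf Hg Hx. unfold PSeries, padd.
  rewrite <- Series_plus; try apply ev_ex; auto. apply Series_ext; intros; ring.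
Qed.

Lemma ev_sc c f x : PSeries (psc c f) x = c * PSeries f x.
Proof.
  unfold PSeries, psc. rewrite <- Series_scal_l. apply Series_ext; intros; ring.
Qed.

Lemma ev_mul f g x : AC r f -> AC r g -> Rabs x < r ->
  PSeries (PS_mult f g) x = PSeries f x * PSeries g x.
Proof.
  intros Hf Hg Hx. apply PSeries_mult; apply AC_radius; auto.
Qed.

Lemma ev_const c x : PSeries (pconst c) x = c.
Proof.
  unfold PSeries. apply is_series_unique.
  apply (series_finite' _ 0). 2:(simpl; ring). intros k Hk. destruct k. lia. simpl. ring.
Qed.

Lemma ev_X x : PSeries pX x = x.
Proof.
  unfold PSeries. apply is_series_unique.
  apply (series_finite' _ 1). 2:(simpl; ring). intros k Hk. destruct k as [|[|k]]; try lia. simpl. ring.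
Qed.

Lemma ev_zero x : PSeries pzero x = 0.
Proof.
  unfold PSeries. apply is_series_unique.
  apply (series_finite' _ 0). 2:(simpl; unfold pzero; ring). intros k Hk. unfold pzero. ring.
Qed.

Lemma AC_sum (F : nat -> nat -> R) : (forall n, AC r (F n)) ->
  ex_series (fun n => nrm r (F n)) ->
  AC r (fun k => Series (fun n => F n k)) /\
  nrm r (fun k => Series (fun n => F n k)) <= Series (fun n => nrm r (F n)) /\
  forall x, Rabs x < r ->
    is_pseries (fun k => Series (fun n => F n k)) x (Series (fun n => PSeries (F n) x)).
Proof.
  intros HF Hs.
  set (p := fun n k => Rabs (F n k) * r ^ k).
  destruct (fubini_pos p) as [Hcp [Hep Eqp]]; auto.
  { intros; apply term_nonneg. }
  assert (HG : forall k, Rabs (Rabs (Series (fun n => F n k)) * r ^ k) <= Series (fun n => p n k)).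
  { intros k. rewrite Rabs_pos_eq by (apply Rmult_le_pos; [apply Rabs_pos|apply pow_le; lra]).
    unfold p. rewrite Series_scal_r. apply Rmult_le_compat_r. apply pow_le; lra.
    apply (series_le_gen (fun n => F n k) (fun n => Rabs (F n k))).
    intros; apply Rle_refl.
    specialize (Hcp k). apply (ex_series_scal_r (/ r ^ k)) in Hcp.
    eapply ex_series_ext; [|exact Hcp]. intros n; unfold p. rewrite Rmult_assoc, Rinv_r, Rmult_1_r. reflexivity. apply pow_nonzero; lra. }
  destruct (series_le_gen _ _ HG Hep) as [H1 H2].
  split; auto. split.
  { eapply Rle_trans; [apply Rle_abs|]. eapply Rle_trans; [exact H2|]. rewrite Eqp. right; reflexivity. }
  intros x Hx. apply is_pseries_R.
  set (a := fun n k => F n k * x ^ k).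
  assert (Hab : forall n k, Rabs (a n k) <= p n k).
  { intros n k. unfold a, p. rewrite Rabs_mult, <- RPow_abs. apply Rmult_le_compat_l. apply Rabs_pos.
    apply pow_incr. split. apply Rabs_pos. lra. }
  destruct (fubini a) as [Hca [Hea Eqa]].
  { intros n. apply (ex_series_le_R _ (p n)). intros k. rewrite Rabs_Rabsolu; auto. apply HF. }
  { apply (ex_series_le_R _ (fun n => Series (p n))). 2: exact Hs.
    intros n. rewrite Rabs_pos_eq. apply Series_le. intros k; split; auto. apply Rabs_pos. apply HF.
    apply series_nonneg. intros; apply Rabs_pos. apply (ex_series_le_R _ (p n)).
    intros k. rewrite Rabs_Rabsolu; auto. apply HF. }
  assert (E : forall k, Series (fun n => F n k) * x ^ k = Series (fun n => a n k)).
  { intros k. unfold a. rewrite Series_scal_r. reflexivity. }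
  eapply is_series_ext. intros k; symmetry; apply E.
  replace (Series (fun n => PSeries (F n) x)) with (Series (fun k => Series (fun n => a n k))).
  apply Series_correct; auto.
Qed.

End Alg.

Lemma sum_f_le_gen (f g : nat -> R) N : (forall k, f k <= g k) -> sum_f_R0 f N <= sum_f_R0 g N.
Proof. intros H; induction N; simpl; auto. specialize (H (S N)); lra. Qed.

Section Gen.
Variable X : Type.
Variables (zero : X) (add mul : X -> X -> X) (sc : R -> X -> X).
Variable aa : X.
Variable init : nat -> X.

Fixpoint sumX (f : nat -> X) (n : nat) : X :=
  match n with O => f O | S m => add (sumX f m) (f (S m)) end.
Definition convX (f g : nat -> X) (n : nat) : X := sumX (fun k => mul (f k) (g (n - k)%nat)) n.
Definition Pn (p : nat) : R := INR ((p + 1) * (p + 2) * (p + 3) * (p + 4)).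
Definition rhs (h : nat -> X) (p : nat) : X :=
  sc (- / Pn p) (add (add (convX h (convX h h) p) (mul aa (h p)))
                     (match p with O => zero | S q => h q end)).
Definition nextc (h : nat -> X) (n : nat) : X :=
  match n with S (S (S (S p))) => rhs h p | _ => init n end.
Fixpoint hist (n : nat) : nat -> X :=
  match n with O => fun _ => zero
  | S m => fun i => if Nat.ltb i m then hist m i else nextc (hist m) m end.
Definition coef (n : nat) : X := hist (S n) n.

Lemma hist_coef m i : (i < m)%nat -> hist m i = coef i.
Proof.
  induction m; intros H. lia.
  simpl. destruct (Nat.ltb i m) eqn:E.
  - apply Nat.ltb_lt in E. auto.
  - apply Nat.ltb_ge in E. assert (i = m) by lia. subst. unfold coef. simpl.
    rewrite Nat.ltb_irrefl. reflexivity.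
Qed.

Lemma sumX_ext f g n : (forall k, (k <= n)%nat -> f k = g k) -> sumX f n = sumX g n.
Proof.
  induction n; intros H; simpl. apply H; lia. rewrite IHn by (intros; apply H; lia). rewrite H; auto.
Qed.

Lemma rhs_ext h h' p : (forall i, (i <= p)%nat -> h i = h' i) -> rhs h p = rhs h' p.
Proof.
  intros H. unfold rhs. unfold convX.
  rewrite (sumX_ext (fun k => mul (h k) (sumX (fun k0 => mul (h k0) (h (p - k - k0)%nat)) (p - k))) 
                    (fun k => mul (h' k) (sumX (fun k0 => mul (h' k0) (h' (p - k - k0)%nat)) (p - k)))).
  rewrite (H p) by lia. destruct p. reflexivity. rewrite (H p) by lia. reflexivity.
  intros k Hk. rewrite H by lia. f_equal. apply sumX_ext. intros j Hj. rewrite !H by lia. reflexivity.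
Qed.

Lemma coef_eq n : coef n = nextc (hist n) n.
Proof.
  unfold coef. change (hist (S n) n) with (if Nat.ltb n n then hist n n else nextc (hist n) n).
  rewrite Nat.ltb_irrefl. reflexivity.
Qed.

Lemma coef_init n : (n < 4)%nat -> coef n = init n.
Proof.
  intros H. rewrite coef_eq.
  destruct n as [|[|[|[|n]]]]; try reflexivity; lia.
Qed.

Lemma coef_rec p : coef (p + 4) = rhs coef p.
Proof.
  rewrite coef_eq.
  replace (p + 4)%nat with (S (S (S (S p)))) by lia.
  change (nextc (hist (S (S (S (S p))))) (S (S (S (S p))))) with (rhs (hist (S (S (S (S p))))) p).
  apply rhs_ext. intros i Hi. apply hist_coef. lia.
Qed.

End Gen.

Arguments coef {X} zero add mul sc aa init n.
Arguments rhs {X} zero add mul sc aa h p.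
Arguments convX {X} add mul f g n.
Arguments sumX {X} add f n.

Section Hom.
Variables X Y : Type.
Variables (zero : X) (add mul : X -> X -> X) (sc : R -> X -> X) (aa : X) (init : nat -> X).
Variables (zero' : Y) (add' mul' : Y -> Y -> Y) (sc' : R -> Y -> Y) (aa' : Y) (init' : nat -> Y).
Variable P : X -> Prop.
Variable phi : X -> Y.
Hypotheses (Pz : P zero) (Padd : forall x y, P x -> P y -> P (add x y))
  (Pmul : forall x y, P x -> P y -> P (mul x y)) (Psc : forall c x, P x -> P (sc c x))
  (Pa : P aa) (Pinit : forall n, (n < 4)%nat -> P (init n)).

Lemma P_sumX f n : (forall k, (k <= n)%nat -> P (f k)) -> P (sumX add f n).
Proof. induction n; intros H; simpl. apply H; lia. apply Padd. apply IHn; intros; apply H; lia. apply H; lia. Qed.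

Lemma P_rhs h p : (forall i, (i <= p)%nat -> P (h i)) -> P (rhs zero add mul sc aa h p).
Proof.
  intros H. unfold rhs. apply Psc. apply Padd. apply Padd.
  unfold convX. apply P_sumX. intros k Hk. apply Pmul. apply H; lia.
  apply P_sumX. intros j Hj. apply Pmul; apply H; lia.
  apply Pmul; auto.
  destruct p; auto.
Qed.

Lemma P_coef n : P (coef zero add mul sc aa init n).
Proof.
  assert (forall m i, (i <= m)%nat -> P (coef zero add mul sc aa init i)).
  { induction m; intros i Hi.
    - replace i with 0%nat by lia. rewrite coef_init by lia. apply Pinit; lia.
    - destruct (Nat.eq_dec i (S m)); [|apply IHm; lia]. subst i.
      destruct (Nat.lt_ge_cases (S m) 4).
      + rewrite coef_init by auto. apply Pinit; auto.
      + replace (S m) with ((m - 3) + 4)%nat by lia. rewrite coef_rec. apply P_rhs.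
        intros; apply IHm; lia. }
  apply (H n); auto.
Qed.

Hypotheses (hz : phi zero = zero') (hadd : forall x y, P x -> P y -> phi (add x y) = add' (phi x) (phi y))
  (hmul : forall x y, P x -> P y -> phi (mul x y) = mul' (phi x) (phi y))
  (hsc : forall c x, P x -> phi (sc c x) = sc' c (phi x))
  (ha : phi aa = aa') (hinit : forall n, (n < 4)%nat -> phi (init n) = init' n).

Lemma hom_sumX f n : (forall k, (k <= n)%nat -> P (f k)) ->
  phi (sumX add f n) = sumX add' (fun k => phi (f k)) n.
Proof.
  induction n; intros H; simpl. reflexivity.
  rewrite hadd. rewrite IHn. reflexivity. intros; apply H; lia.
  apply P_sumX; intros; apply H; lia. apply H; lia.
Qed.

Lemma hom_coef n : phi (coef zero add mul sc aa init n) = coef zero' add' mul' sc' aa' init' n.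
Proof.
  assert (forall m i, (i <= m)%nat -> phi (coef zero add mul sc aa init i) = coef zero' add' mul' sc' aa' init' i).
  { induction m; intros i Hi.
    - replace i with 0%nat by lia. rewrite !coef_init by lia. apply hinit; lia.
    - destruct (Nat.eq_dec i (S m)); [|apply IHm; lia]. subst i.
      destruct (Nat.lt_ge_cases (S m) 4).
      + rewrite !coef_init by auto. apply hinit; auto.
      + replace (S m) with ((m - 3) + 4)%nat by lia. rewrite !coef_rec.
        set (p := (m - 3)%nat). assert (Hp : (p <= m)%nat) by (unfold p; lia). clearbody p.
        set (c := coef zero add mul sc aa init). set (c' := coef zero' add' mul' sc' aa' init').
        assert (Pc : forall i, P (c i)) by (intros; apply P_coef).
        assert (Ec : forall i, (i <= p)%nat -> phi (c i) = c' i) by (intros; apply IHm; lia).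
        unfold rhs.
        Local Ltac PP Pc Pa Pz Padd Pmul Psc := repeat (first [progress intros | apply Pc | apply Pa | apply Pz | apply Padd | apply Pmul | apply Psc | (apply P_sumX; intros) | (match goal with |- _ (match ?p with _ => _ end) => destruct p end)]).
        rewrite hsc by PP Pc Pa Pz Padd Pmul Psc.
        rewrite hadd by PP Pc Pa Pz Padd Pmul Psc.
        rewrite hadd by PP Pc Pa Pz Padd Pmul Psc.
        rewrite hmul by PP Pc Pa Pz Padd Pmul Psc.
        f_equal. f_equal. f_equal.
        * unfold convX. rewrite hom_sumX by PP Pc Pa Pz Padd Pmul Psc.
          apply sumX_ext. intros k Hk. rewrite hmul by PP Pc Pa Pz Padd Pmul Psc. rewrite Ec by lia. f_equal.
          rewrite hom_sumX by PP Pc Pa Pz Padd Pmul Psc. apply sumX_ext. intros j Hj.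
          rewrite hmul by PP Pc Pa Pz Padd Pmul Psc. rewrite !Ec by lia. reflexivity.
        * rewrite ha, Ec; auto.
        * destruct p. auto. apply Ec; lia. }
  apply (H n); auto.
Qed.
End Hom.

Section Norm.
Variable X : Type.
Variables (zero : X) (add mul : X -> X -> X) (sc : R -> X -> X) (aa : X) (init : nat -> X).
Variable P : X -> Prop.
Variable nu : X -> R.
Hypotheses (Pz : P zero) (Padd : forall x y, P x -> P y -> P (add x y))
  (Pmul : forall x y, P x -> P y -> P (mul x y)) (Psc : forall c x, P x -> P (sc c x))
  (Pa : P aa) (Pinit : forall n, (n < 4)%nat -> P (init n)).
Hypotheses (nz : nu zero = 0) (nadd : forall x y, P x -> P y -> nu (add x y) <= nu x + nu y)
  (nmul : forall x y, P x -> P y -> nu (mul x y) <= nu x * nu y)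
  (nsc : forall c x, P x -> nu (sc c x) <= Rabs c * nu x)
  (npos : forall x, P x -> 0 <= nu x).

Lemma nu_sumX f n : (forall k, (k <= n)%nat -> P (f k)) ->
  nu (sumX add f n) <= sum_f_R0 (fun k => nu (f k)) n.
Proof.
  induction n; intros H; simpl. lra.
  eapply Rle_trans. apply nadd. { apply (P_sumX X add P Padd). intros; apply H; lia. } { apply H; lia. }
  assert (nu (sumX add f n) <= sum_f_R0 (fun k => nu (f k)) n) by (apply IHn; intros; apply H; lia). lra.
Qed.

Lemma Pn_pos p : 0 < Pn p.
Proof. unfold Pn. apply lt_0_INR. lia. Qed.

Lemma nu_rec p :
  let c := coef zero add mul sc aa init in
  Pn p * nu (c (p + 4)%nat) <=
    sum_f_R0 (fun k => nu (c k) * sum_f_R0 (fun j => nu (c j) * nu (c (p - k - j)%nat)) (p - k)) p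
    + nu aa * nu (c p) + match p with O => 0 | S q => nu (c q) end.
Proof.
  intros c. assert (E : c (p+4)%nat = rhs zero add mul sc aa c p) by apply coef_rec. rewrite E.
  assert (Pc : forall i, P (c i)) by (intros; apply (P_coef X zero add mul sc aa init P Pz Padd Pmul Psc Pa Pinit)).
  Local Ltac PP Pc Pa Pz Padd Pmul Psc := repeat (first [progress intros | apply Pc | apply Pa | apply Pz | apply Padd | apply Pmul | apply Psc | (apply (P_sumX X add P Padd); intros) | (match goal with |- _ (match ?p with _ => _ end) => destruct p end)]).
  unfold rhs.
  assert (HPn := Pn_pos p).
  eapply Rle_trans. apply Rmult_le_compat_l. lra. apply nsc. PP Pc Pa Pz Padd Pmul Psc.
  rewrite Rabs_Ropp, Rabs_pos_eq by (left; apply Rinv_0_lt_compat; auto).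
  rewrite <- Rmult_assoc, Rinv_r, Rmult_1_l by lra.
  eapply Rle_trans. apply nadd; PP Pc Pa Pz Padd Pmul Psc.
  apply Rplus_le_compat.
  eapply Rle_trans. apply nadd; PP Pc Pa Pz Padd Pmul Psc.
  apply Rplus_le_compat.
  - unfold convX. eapply Rle_trans. apply nu_sumX. PP Pc Pa Pz Padd Pmul Psc.
    apply sum_f_le_gen. intros k.
    eapply Rle_trans. apply nmul; PP Pc Pa Pz Padd Pmul Psc.
    apply Rmult_le_compat_l. apply npos, Pc.
    eapply Rle_trans. apply nu_sumX. PP Pc Pa Pz Padd Pmul Psc.
    apply sum_f_le_gen. intros j. apply nmul; apply Pc.
  - apply nmul; auto.
  - destruct p. rewrite nz; lra. lra.
Qed.
End Norm.

Definition S3 (m : nat -> R) (p : nat) : R :=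
  sum_f_R0 (fun k => m k * sum_f_R0 (fun j => m j * m (p - k - j)%nat) (p - k)) p.

Lemma sum_const_bound (f : nat -> R) n B : (forall k, (k <= n)%nat -> f k <= B) ->
  sum_f_R0 f n <= INR (S n) * B.
Proof.
  induction n; intros H.
  - simpl. assert (f 0%nat <= B) by (apply H; lia). lra.
  - change (sum_f_R0 f (S n)) with (sum_f_R0 f n + f (S n)).
    assert (sum_f_R0 f n <= INR (S n) * B) by (apply IHn; intros; apply H; lia).
    assert (f (S n) <= B) by (apply H; lia).
    rewrite (S_INR (S n)). rewrite Rmult_plus_distr_r, Rmult_1_l. lra.
Qed.

Lemma sum_nonneg' (f : nat -> R) N : (forall k, 0 <= f k) -> 0 <= sum_f_R0 f N.
Proof. intros H; induction N; simpl; auto. specialize (H (S N)); lra. Qed.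

Lemma S3_bound m p rho M : 0 < rho -> (forall n, 0 <= m n) ->
  (forall i, (i <= p)%nat -> m i * rho ^ i <= M) ->
  S3 m p * rho ^ p <= INR (S p) * (INR (S p) * (M * (M * M))).
Proof.
  intros Hr Hp HM. unfold S3. rewrite Rmult_comm, scal_sum.
  apply sum_const_bound. intros k Hk.
  replace (rho ^ p) with (rho ^ k * rho ^ (p - k)) by (rewrite <- pow_add; f_equal; lia).
  replace (m k * sum_f_R0 (fun j => m j * m (p - k - j)%nat) (p - k) * (rho ^ k * rho ^ (p - k)))
    with ((m k * rho ^ k) * (sum_f_R0 (fun j => m j * m (p - k - j)%nat) (p - k) * rho ^ (p - k))) by ring.
  assert (0 <= M). { eapply Rle_trans; [|apply (HM 0%nat); lia]. simpl. rewrite Rmult_1_r; auto. }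
  replace (INR (S p) * (M * (M * M))) with (M * (INR (S p) * (M * M))) by ring.
  apply Rmult_le_compat.
  { apply Rmult_le_pos; auto. apply pow_le; lra. }
  { apply Rmult_le_pos. apply sum_nonneg'. intros; apply Rmult_le_pos; auto. apply pow_le; lra. }
  { apply HM; lia. }
  rewrite Rmult_comm, scal_sum. eapply Rle_trans. apply sum_const_bound with (B := M * M).
  { intros j Hj. replace (rho ^ (p - k)) with (rho ^ j * rho ^ (p - k - j)) by (rewrite <- pow_add; f_equal; lia).
    replace (m j * m (p - k - j)%nat * (rho ^ j * rho ^ (p - k - j)))
      with ((m j * rho ^ j) * (m (p - k - j)%nat * rho ^ (p - k - j))) by ring.
    apply Rmult_le_compat.
    { apply Rmult_le_pos; auto; apply pow_le; lra. }
    { apply Rmult_le_pos; auto; apply pow_le; lra. }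
    { apply HM; lia. }
    { apply HM; lia. } }
  apply Rmult_le_compat_r. apply Rmult_le_pos; auto. apply le_INR. lia.
Qed.

Lemma Pn_ge p : INR (S p) * INR (S p) <= Pn p /\ INR (S p) <= Pn p /\ 1 <= Pn p.
Proof.
  unfold Pn. rewrite <- mult_INR. split; [|split].
  - apply le_INR. nia.
  - apply le_INR. nia.
  - replace 1 with (INR 1) by reflexivity. apply le_INR. nia.
Qed.

Lemma exists_nat_gt (L : R) : exists N : nat, L < INR N.
Proof.
  destruct (archimed (Rabs L)) as [H1 _].
  assert (0 <= IZR (up (Rabs L))) by (pose proof (Rabs_pos L); lra).
  exists (Z.to_nat (up (Rabs L))). rewrite INR_IZR_INZ, Z2Nat.id.
  pose proof (Rle_abs L); lra. apply le_IZR. exact H.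
Qed.

Lemma rec_bound (al rho : R) : 0 <= al -> 1 <= rho ->
  exists e0, 0 < e0 /\ exists K, forall (e : R) (m : nat -> R), 0 <= e <= e0 ->
    (forall n, 0 <= m n) -> (forall i, (i < 4)%nat -> m i <= e) ->
    (forall p, Pn p * m (p + 4)%nat <= S3 m p + al * m p + match p with O => 0 | S q => m q end) ->
    forall n, m n * rho ^ n <= K.
Proof.
  intros Hal Hrho.
  set (L := 2 * rho ^ 4 * (al + rho) + rho + 1).
  assert (Hr4 : 1 <= rho ^ 4) by (apply pow_R1_Rle; lra).
  assert (HL1 : 2 * rho ^ 4 * (al + rho) <= L) by (unfold L; lra).
  assert (HL2 : rho <= L) by (unfold L; nra).
  assert (HL3 : 1 <= L) by (unfold L; nra).
  destruct (exists_nat_gt L) as [N0 HN0].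
  set (N := (N0 + 4)%nat).
  assert (HN : L <= INR N) by (unfold N; rewrite plus_INR; simpl; lra).
  set (H := L).
  set (X := 2 * rho ^ 4 * H ^ (3 * N)).
  assert (HX : 0 <= X) by (unfold X; apply Rmult_le_pos; [lra| apply pow_le; unfold H; lra]).
  exists (/ (X + 1)). split. apply Rinv_0_lt_compat; lra.
  exists (/ (X + 1) * H ^ N).
  intros e m He Hm Hinit Hrec.
  assert (He1 : e <= 1).
  { destruct He. eapply Rle_trans; [exact H1|]. rewrite <- Rinv_1. apply Rinv_le_contravar; lra. }
  assert (HeX : e * e * X <= 1).
  { destruct He as [He0 He2]. assert (e * (X + 1) <= 1).
    { apply Rmult_le_reg_r with (/ (X + 1)). apply Rinv_0_lt_compat; lra.
      rewrite Rmult_assoc, Rinv_r, Rmult_1_r, Rmult_1_l by lra. auto. }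
    nra. }
  assert (HH1 : 1 <= H) by (unfold H; lra).
  assert (Hpow : forall a b, (a <= b)%nat -> H ^ a <= H ^ b) by (intros; apply Rle_pow; auto).
  assert (Hpos : forall a, 0 < H ^ a) by (intros; apply pow_lt; lra).
  assert (Claim : forall n i, (i <= n)%nat -> m i * rho ^ i <= e * H ^ (Nat.min i N)).
  { induction n; intros i Hi.
    - replace i with 0%nat by lia. simpl. assert (m 0%nat <= e) by (apply Hinit; lia). lra.
    - destruct (Nat.eq_dec i (S n)) as [->|Hne]; [|apply IHn; lia].
      destruct (Nat.lt_ge_cases (S n) 4) as [Hlt|Hge].
      + rewrite Nat.min_l by (unfold N; lia).
        apply Rmult_le_compat. apply Hm. apply pow_le; lra. apply Hinit; auto.
        apply pow_incr. unfold H; lra.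
      + set (p := (n - 3)%nat). replace (S n) with (p + 4)%nat by (unfold p; lia).
        assert (IHp : forall j, (j <= p + 3)%nat -> m j * rho ^ j <= e * H ^ (Nat.min j N)).
        { intros; apply IHn; unfold p in *; lia. }
        set (M := e * H ^ N).
        assert (HM : forall j, (j <= p)%nat -> m j * rho ^ j <= M).
        { intros j Hj. eapply Rle_trans. apply IHp; lia. apply Rmult_le_compat_l. lra. apply Hpow; lia. }
        assert (HS3 := S3_bound m p rho M ltac:(lra) Hm HM).
        assert (Hpm := IHp p ltac:(lia)).
        assert (Hq : match p with O => 0 | S q => m q end * rho ^ (p + 4) <= rho ^ 5 * (e * H ^ Nat.min p N)).
        { destruct p as [|q]. change (match 0%nat with O => 0 | S q => m q end) with 0.
          rewrite Rmult_0_l. apply Rmult_le_pos. apply pow_le; lra.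
          apply Rmult_le_pos. lra. left; apply Hpos.
          replace (rho ^ (S q + 4)) with (rho ^ 5 * rho ^ q) by (rewrite <- pow_add; f_equal; lia).
          replace (m q * (rho ^ 5 * rho ^ q)) with (rho ^ 5 * (m q * rho ^ q)) by ring.
          apply Rmult_le_compat_l. apply pow_le; lra.
          eapply Rle_trans. apply IHp; lia. apply Rmult_le_compat_l. lra. apply Hpow; lia. }
        destruct (Pn_ge p) as [Pg1 [Pg2 Pg3]].
        assert (HPp := Pn_pos p).
        apply Rmult_le_reg_l with (Pn p); auto.
        assert (Main : Pn p * (m (p + 4)%nat * rho ^ (p + 4)) <=
                  rho ^ 4 * (S3 m p * rho ^ p) + rho ^ 4 * al * (m p * rho ^ p) +
                  match p with O => 0 | S q => m q end * rho ^ (p + 4)).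
        { replace (Pn p * (m (p + 4)%nat * rho ^ (p + 4))) with ((Pn p * m (p + 4)%nat) * rho ^ (p + 4)) by ring.
          replace (rho ^ (p + 4)) with (rho ^ 4 * rho ^ p) at 1 by (rewrite <- pow_add; f_equal; lia).
          assert (0 <= rho ^ 4 * rho ^ p) by (apply Rmult_le_pos; apply pow_le; lra).
          replace (rho ^ 4 * (S3 m p * rho ^ p) + rho ^ 4 * al * (m p * rho ^ p) +
                  match p with O => 0 | S q => m q end * rho ^ (p + 4))
            with ((S3 m p + al * m p) * (rho ^ 4 * rho ^ p) + match p with O => 0 | S q => m q end * rho ^ (p + 4)) by ring.
          replace (rho ^ (p + 4)) with (rho ^ 4 * rho ^ p) by (rewrite <- pow_add; f_equal; lia).
          rewrite <- Rmult_plus_distr_r. apply Rmult_le_compat_r; auto. }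
        set (Hm4 := H ^ Nat.min (p + 4) N). set (Hm0 := H ^ Nat.min p N).
        assert (Hm4ge : 1 <= Hm4) by (unfold Hm4; apply pow_R1_Rle; lra).
        assert (Hm0pos : 0 < Hm0) by apply Hpos.
        assert (Pa : rho ^ 4 * (INR (S p) * (INR (S p) * (M * (M * M)))) <= Pn p * (e * Hm4) / 2).
        { unfold M. replace (rho ^ 4 * (INR (S p) * (INR (S p) * (e * H ^ N * (e * H ^ N * (e * H ^ N))))))
            with ((INR (S p) * INR (S p)) * e * (e * e * (rho ^ 4 * (H ^ N * H ^ N * H ^ N)))) by ring.
          replace (H ^ N * H ^ N * H ^ N) with (H ^ (3 * N)) by (rewrite <- !pow_add; f_equal; lia).
          assert (e * e * (rho ^ 4 * H ^ (3 * N)) <= / 2) by (unfold X in HeX; lra).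
          assert (0 <= INR (S p) * INR (S p)) by (apply Rmult_le_pos; apply pos_INR).
          destruct He.
          assert (A1 : INR (S p) * INR (S p) * e * (e * e * (rho ^ 4 * H ^ (3 * N))) <= INR (S p) * INR (S p) * e * / 2).
          { apply Rmult_le_compat_l. apply Rmult_le_pos; lra. auto. }
          assert (A2 : INR (S p) * INR (S p) * e <= Pn p * e) by (apply Rmult_le_compat_r; lra).
          assert (A3 : Pn p * e * 1 <= Pn p * e * Hm4) by (apply Rmult_le_compat_l; nra).
          unfold Rdiv. lra. }
        assert (Pb : rho ^ 4 * (al + rho) * (e * Hm0) <= Pn p * (e * Hm4) / 2).
        { destruct He as [He0 _].
          destruct (Nat.lt_ge_cases p N) as [HpN|HpN].
          - assert (Hm0 * H <= Hm4).
            { unfold Hm0, Hm4. replace (H ^ Nat.min p N * H) with (H ^ S (Nat.min p N)) by (simpl; ring). apply Hpow. lia. }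
            apply Rle_trans with (Pn p * (e * (Hm0 * H)) / 2).
            + replace (Pn p * (e * (Hm0 * H)) / 2) with ((e * Hm0) * (Pn p * H / 2)) by field.
              rewrite Rmult_comm. apply Rmult_le_compat_l. nra.
              assert (2 * rho ^ 4 * (al + rho) <= 1 * H) by (unfold H; lra).
              assert (1 * H <= Pn p * H) by (apply Rmult_le_compat_r; lra). lra.
            + unfold Rdiv. apply Rmult_le_compat_r. lra. apply Rmult_le_compat_l. lra.
              apply Rmult_le_compat_l; lra.
          - assert (Hm0 = Hm4) by (unfold Hm0, Hm4; f_equal; lia). rewrite <- H0.
            replace (Pn p * (e * Hm0) / 2) with ((e * Hm0) * (Pn p / 2)) by field.
            rewrite Rmult_comm. apply Rmult_le_compat_l. nra.
            assert (INR N <= INR (S p)) by (apply le_INR; lia). unfold Rdiv. lra. }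
        assert (Hal2 : rho ^ 4 * al * (m p * rho ^ p) <= rho ^ 4 * al * (e * Hm0)).
        { apply Rmult_le_compat_l. apply Rmult_le_pos; lra. exact Hpm. }
        assert (HS3' : rho ^ 4 * (S3 m p * rho ^ p) <= rho ^ 4 * (INR (S p) * (INR (S p) * (M * (M * M))))).
        { apply Rmult_le_compat_l; lra. }
        fold Hm0 in Hq.
        lra. }
  intros n. eapply Rle_trans. apply (Claim n n); lia.
  apply Rmult_le_compat. lra. left; apply Hpos. lra. apply Hpow. lia.
Qed.

Section Binom.
Variable q : R.
Hypothesis Hq : 0 < q < 1.

Fixpoint bc (k : nat) : R := match k with O => 1 | S k => bc k * (q - INR k) / INR (S k) end.

Lemma bc_bound k : Rabs (bc k) <= 1.
Proof.
  induction k. simpl. rewrite Rabs_R1; lra.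
  change (bc (S k)) with (bc k * (q - INR k) / INR (S k)).
  unfold Rdiv. rewrite !Rabs_mult.
  assert (HS : 0 < INR (S k)) by (apply lt_0_INR; lia).
  rewrite (Rabs_pos_eq (/ INR (S k))) by (left; apply Rinv_0_lt_compat; auto).
  assert (Rabs (q - INR k) <= INR (S k)).
  { rewrite S_INR. assert (0 <= INR k) by apply pos_INR. apply Rabs_le. lra. }
  assert (Rabs (q - INR k) * / INR (S k) <= 1).
  { apply Rmult_le_reg_r with (INR (S k)); auto. rewrite Rmult_assoc, Rinv_l by lra. lra. }
  assert (0 <= Rabs (q - INR k) * / INR (S k)).
  { apply Rmult_le_pos. apply Rabs_pos. left; apply Rinv_0_lt_compat; auto. }
  rewrite Rmult_assoc. assert (0 <= Rabs (bc k)) by apply Rabs_pos. nra.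
Qed.

Lemma bc_radius : Rbar_le 1 (CV_radius bc).
Proof.
  destruct (CV_radius_bounded bc) as [Hub _]. apply Hub. exists 1. intros n.
  rewrite pow1, Rmult_1_r. apply bc_bound.
Qed.

Lemma bc_in y : Rabs y < 1 -> Rbar_lt (Rabs y) (CV_radius bc).
Proof.
  intros H. assert (Hb := bc_radius). destruct (CV_radius bc); simpl in *; auto; lra.
Qed.

Lemma bc_deriv y : Rabs y < 1 ->
  (1 + y) * PSeries (PS_derive bc) y = q * PSeries bc y.
Proof.
  intros Hy.
  assert (Hin := bc_in y Hy).
  assert (E1 : forall n, PS_derive bc n = q * bc n - INR n * bc n).
  { intros n. unfold PS_derive. change (bc (S n)) with (bc n * (q - INR n) / INR (S n)). field. apply not_0_INR. lia. }
  assert (E2 : PSeries (fun n => INR n * bc n) y = y * PSeries (PS_derive bc) y).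
  { rewrite <- PSeries_incr_1. apply Series_ext. intros n. destruct n.
    change (PS_incr_1 (PS_derive bc) 0) with (@zero R_AbelianMonoid). change (@zero R_AbelianMonoid) with 0. simpl; ring.
    change (PS_incr_1 (PS_derive bc) (S n)) with (PS_derive bc n). unfold PS_derive. ring. }
  assert (Ex1 : ex_pseries bc y) by (apply CV_radius_inside; auto).
  assert (Ex2 : ex_pseries (fun n => INR n * bc n) y).
  { apply ex_pseries_ext with (PS_incr_1 (PS_derive bc)).
    intros n; destruct n. change (PS_incr_1 (PS_derive bc) 0) with (@zero R_AbelianMonoid). change (@zero R_AbelianMonoid) with 0. simpl; ring.
    change (PS_incr_1 (PS_derive bc) (S n)) with (PS_derive bc n). unfold PS_derive. reflexivity.
    apply ex_pseries_incr_1. apply ex_pseries_derive; auto. }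
  assert (E3 : PSeries (PS_derive bc) y = q * PSeries bc y - PSeries (fun n => INR n * bc n) y).
  { rewrite <- PSeries_scal. 
    unfold PSeries. rewrite <- Series_minus.
    apply Series_ext. intros n. rewrite E1. unfold PS_scal, scal; simpl. unfold mult; simpl. ring.
    apply ex_pseries_R. apply (ex_pseries_scal q bc y). unfold mult; simpl; ring. exact Ex1.
    apply ex_pseries_R. exact Ex2. }
  rewrite E2 in E3. lra.
Qed.

Theorem binomial_series y : Rabs y < 1 -> PSeries bc y = Rpower (1 + y) q.
Proof.
  intros Hy.
  set (h := fun t => PSeries bc t / Rpower (1 + t) q).
  assert (Hd : forall t, Rabs t < 1 -> is_derive h t 0).
  { intros t Ht.
    assert (Ht1 : 0 < 1 + t) by (apply Rabs_def2 in Ht; lra).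
    assert (Dg : is_derive (fun t => Rpower (1 + t) q) t (q * Rpower (1 + t) (q - 1))).
    { assert (D1 : is_derive (fun x => Rpower x q) (1 + t) (q * Rpower (1 + t) (q - 1))).
      { apply is_derive_Reals. apply derivable_pt_lim_power; auto. }
      assert (D2 : is_derive (fun t => 1 + t) t 1).
      { auto_derive; auto; ring. }
      assert (D3 := is_derive_comp (fun x => Rpower x q) (fun t => 1 + t) t _ _ D1 D2).
      simpl in D3. unfold scal in D3; simpl in D3; unfold mult in D3; simpl in D3.
      rewrite Rmult_1_l in D3. exact D3. }
    assert (Df := is_derive_PSeries bc t (bc_in t Ht)).
    assert (Hg0 : Rpower (1 + t) q <> 0) by (unfold Rpower; apply Rgt_not_eq, exp_pos).
    assert (HH := is_derive_div _ _ t _ _ Df Dg Hg0).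
    unfold h. replace 0 with ((PSeries (PS_derive bc) t * Rpower (1 + t) q - PSeries bc t * (q * Rpower (1 + t) (q - 1))) / Rpower (1 + t) q ^ 2).
    exact HH.
    assert (Rpower (1 + t) q = Rpower (1 + t) (q - 1) * (1 + t)).
    { rewrite <- (Rpower_1 (1 + t)) at 3 by auto. rewrite <- Rpower_plus. f_equal; ring. }
    rewrite H. replace (PSeries (PS_derive bc) t * (Rpower (1 + t) (q - 1) * (1 + t)) -
       PSeries bc t * (q * Rpower (1 + t) (q - 1))) with
       (Rpower (1 + t) (q - 1) * ((1 + t) * PSeries (PS_derive bc) t - q * PSeries bc t)) by ring.
    rewrite bc_deriv; auto. unfold Rdiv. ring. }
  assert (Hh : h y = h 0).
  { destruct (Rlt_or_le y 0) as [Hn|Hp].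
    - apply (eq_is_derive h y 0); auto. intros t Ht. apply Hd. apply Rabs_def1; apply Rabs_def2 in Hy; lra.
    - destruct Hp as [Hp| <-]; [|reflexivity]. symmetry.
      apply (eq_is_derive h 0 y); auto. intros t Ht. apply Hd. apply Rabs_def1; apply Rabs_def2 in Hy; lra. }
  unfold h in Hh. rewrite PSeries_0 in Hh. change (bc 0) with 1 in Hh. rewrite Rplus_0_r in Hh.
  assert (E : Rpower 1 q = 1) by (unfold Rpower; rewrite ln_1, Rmult_0_r, exp_0; reflexivity).
  rewrite E in Hh.
  assert (Hg0 : Rpower (1 + y) q <> 0) by (unfold Rpower; apply Rgt_not_eq, exp_pos).
  unfold Rdiv in Hh. rewrite Rinv_1, Rmult_1_l in Hh.
  apply (f_equal (fun z => z * Rpower (1 + y) q)) in Hh.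
  rewrite Rmult_assoc, Rinv_l, Rmult_1_r, Rmult_1_l in Hh by auto. exact Hh.
Qed.
End Binom.

Fixpoint ppow (f : nat -> R) (k : nat) : nat -> R :=
  match k with O => pconst 1 | S k => PS_mult f (ppow f k) end.

Lemma AC_ppow r f k : 0 < r -> AC r f -> AC r (ppow f k) /\ nrm r (ppow f k) <= nrm r f ^ k.
Proof.
  intros Hr Hf. induction k; simpl.
  - destruct (AC_const r 1) as [H1 H2]. split; auto. rewrite H2, Rabs_R1. lra.
  - destruct IHk as [H1 H2]. destruct (AC_mul r Hr f (ppow f k) Hf H1) as [H3 H4]. split; auto.
    eapply Rle_trans; [exact H4|]. apply Rmult_le_compat_l. apply nrm_nonneg; auto. auto.
Qed.

Lemma ev_ppow r f k x : 0 < r -> AC r f -> Rabs x < r -> PSeries (ppow f k) x = PSeries f x ^ k.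
Proof.
  intros Hr Hf Hx. induction k; simpl.
  - apply ev_const.
  - rewrite (ev_mul r Hr); auto. rewrite IHk; auto. apply (AC_ppow r f k Hr Hf).
Qed.

Lemma sumX_R f n : sumX Rplus f n = sum_f_R0 f n.
Proof. induction n; simpl; try rewrite IHn; reflexivity. Qed.

Lemma Rpower_le_1plus x p : 0 < x -> 0 <= p <= 1 -> Rpower x p <= 1 + x.
Proof.
  intros Hx Hp. unfold Rpower.
  destruct (Rle_or_lt x 1) as [H1|H1].
  - assert (ln x <= 0). { rewrite <- ln_1. destruct H1. left; apply ln_increasing; auto. subst; lra. }
    assert (p * ln x <= 0) by nra. assert (exp (p * ln x) <= exp 0).
    { destruct H0. left; apply exp_increasing; auto. rewrite H0; lra. }
    rewrite exp_0 in H2. lra.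
  - assert (0 < ln x) by (rewrite <- ln_1; apply ln_increasing; lra).
    assert (p * ln x <= ln x) by nra.
    assert (exp (p * ln x) <= exp (ln x)).
    { destruct H0. left; apply exp_increasing; auto. rewrite H0; lra. }
    rewrite exp_ln in H2; lra.
Qed.

Lemma Rpower_pos x p : 0 < Rpower x p.
Proof. unfold Rpower; apply exp_pos. Qed.

Lemma Rpower_tenth g k : 0 < g -> Rpower g (INR k / 10) = Rpower g (1 / 10) ^ k.
Proof.
  intros Hg. rewrite <- Rpower_pow by apply Rpower_pos. rewrite Rpower_mult. f_equal. field.
Qed.

Definition gfun (d nu : R) := (1 + d ^ 2) * d / (8 * nu ^ 2).

Lemma gfun_pos d nu : 0 < d -> 0 < nu -> 0 < gfun d nu.
Proof.
  intros Hd Hn. unfold gfun. apply Rdiv_lt_0_compat. apply Rmult_lt_0_compat; nra. nra.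
Qed.

Lemma gfun_le d nu : 0 < d <= 1 -> 0 < nu -> gfun d nu <= 1 / (4 * nu ^ 2).
Proof.
  intros Hd Hn. unfold gfun. assert (0 < nu ^ 2) by nra.
  unfold Rdiv. apply Rmult_le_reg_r with (8 * nu ^ 2). nra.
  rewrite !Rmult_assoc, Rinv_l by nra. field_simplify; try nra.
Qed.

Lemma a_pm_le d nu : 0 < d <= 1 -> 0 < nu -> a_pm d nu <= 1 + 1 / (4 * nu ^ 2).
Proof.
  intros Hd Hn. unfold a_pm. eapply Rle_trans. apply Rpower_le_1plus.
  apply (gfun_pos d nu); lra. lra. fold (gfun d nu). pose proof (gfun_le d nu Hd Hn). lra.
Qed.

Definition initR (a x1 x2 : R) (n : nat) : R :=
  match n with
  | O => Rpower a (1/2) * x1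
  | 1%nat => - (Rpower a (3/4) / sqrt 2) * (x1 + x2)
  | 2%nat => a * x2 / 2
  | _ => Rpower a (5/4) / sqrt 2 * (x1 - x2) / 6
  end.

Definition creal (a x1 x2 : R) : nat -> R := coef 0 Rplus Rmult Rmult a (initR a x1 x2).

Lemma fact_ratio k : INR (Factorial.fact (k + 4)) / INR (Factorial.fact k) = Pn k.
Proof.
  unfold Pn. replace (k + 4)%nat with (S (S (S (S k)))) by lia.
  change (Factorial.fact (S (S (S (S k))))) with (S (S (S (S k))) * (S (S (S k)) * (S (S k) * (S k * Factorial.fact k))))%nat.
  rewrite !mult_INR, !S_INR, !plus_INR. simpl INR. field. apply INR_fact_neq_0.
Qed.

Definition prevR (c : nat -> R) (k : nat) : R := match k with O => 0 | S q => c q end.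

Lemma creal_deriv4 a x1 x2 k :
  PS_derive_n 4 (creal a x1 x2) k =
  - (PS_mult (creal a x1 x2) (PS_mult (creal a x1 x2) (creal a x1 x2)) k + a * creal a x1 x2 k +
     prevR (creal a x1 x2) k).
Proof.
  set (c := creal a x1 x2).
  unfold PS_derive_n. rewrite fact_ratio.
  assert (E : c (k + 4)%nat = rhs 0 Rplus Rmult Rmult a c k) by apply coef_rec.
  rewrite E. unfold rhs, convX. rewrite !sumX_R.
  assert (HP := Pn_pos k).
  unfold PS_mult.
  assert (Ein : forall j, sum_f_R0 (fun k0 => c k0 * sumX Rplus (fun k1 => c k1 * c (j - k0 - k1)%nat) (j - k0)) j =
                    sum_f_R0 (fun k0 => c k0 * sum_f_R0 (fun k1 => c k1 * c (j - k0 - k1)%nat) (j - k0)) j).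
  { intros j. apply sum_eq. intros; rewrite sumX_R; reflexivity. }
  rewrite Ein.
  destruct k as [|q].
  - unfold prevR. cbv beta iota. field. lra.
  - unfold prevR. cbv beta iota. field. lra.
Qed.

Lemma ode_lemma a x1 x2 R1 : 0 < R1 -> AC R1 (creal a x1 x2) ->
  (forall z k, Rabs (z - a) < R1 -> ex_derive_n (fun z => PSeries (creal a x1 x2) (z - a)) k z) /\
  (forall z, Rabs (z - a) < R1 ->
     Derive_n (fun z => PSeries (creal a x1 x2) (z - a)) 4 z =
     - PSeries (creal a x1 x2) (z - a) * (PSeries (creal a x1 x2) (z - a) ^ 2 + z)) /\
  (forall k, Derive_n (fun z => PSeries (creal a x1 x2) (z - a)) k a = creal a x1 x2 k * INR (Factorial.fact k)).
Proof.
  intros HR Hc. set (c := creal a x1 x2).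
  split; [|split].
  - intros z k Hz. apply (ex_derive_n_comp_trans (PSeries c) k z (- a)).
    apply ex_derive_n_PSeries. apply (AC_radius R1); auto.
  - intros z Hz. set (t := z - a).
    assert (E0 : Derive_n (fun z => PSeries c (z - a)) 4 z = Derive_n (PSeries c) 4 t)
      by exact (Derive_n_comp_trans (PSeries c) 4 z (- a)).
    rewrite E0. rewrite Derive_n_PSeries by (apply (AC_radius R1); auto).
    destruct (AC_mul R1 HR c c Hc Hc) as [Hcc _].
    destruct (AC_mul R1 HR c (PS_mult c c) Hc Hcc) as [Hccc _].
    assert (Ht : Rabs t <= R1) by (unfold t; lra).
    assert (Ex1 := ev_ex R1 c t Hc Ht).
    assert (Ex3 := ev_ex R1 _ t Hccc Ht).
    assert (Ex4 : ex_series (fun k => prevR c k * t ^ k)).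
    { apply ex_series_ext with (fun k => PS_incr_1 c k * t ^ k). intros [|k]; reflexivity.
      apply ex_pseries_R. apply ex_pseries_incr_1. apply ex_pseries_R. exact Ex1. }
    assert (Eprev : PSeries (prevR c) t = t * PSeries c t).
    { rewrite <- PSeries_incr_1. apply Series_ext. intros [|k]; reflexivity. }
    assert (L : PSeries (PS_derive_n 4 c) t =
       - (PSeries (PS_mult c (PS_mult c c)) t + a * PSeries c t + PSeries (prevR c) t)).
    { assert (Ea : ex_series (fun k => a * (c k * t ^ k))) by (apply (ex_series_scal_l a (fun k => c k * t ^ k)); auto).
      assert (E12 : ex_series (fun k => PS_mult c (PS_mult c c) k * t ^ k + a * (c k * t ^ k)))
        by (apply (ex_series_plus (fun k => PS_mult c (PS_mult c c) k * t ^ k) (fun k => a * (c k * t ^ k))); auto).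
      unfold PSeries. rewrite <- Series_scal_l. rewrite <- (Series_plus _ _ Ex3 Ea).
      rewrite <- (Series_plus _ _ E12 Ex4). rewrite <- Series_opp.
      apply Series_ext. intros k. unfold c. rewrite creal_deriv4. fold c. ring. }
    rewrite L. rewrite Eprev.
    rewrite (ev_mul R1 HR) by auto. rewrite (ev_mul R1 HR) by auto.
    unfold t. ring.
  - intros k. 
    assert (E0 : Derive_n (fun z => PSeries c (z - a)) k a = Derive_n (PSeries c) k (a + - a))
      by exact (Derive_n_comp_trans (PSeries c) k a (- a)).
    rewrite E0, Rplus_opp_r. apply Derive_n_coef.
    assert (H0 := AC_radius R1 HR c 0 Hc). rewrite Rabs_R0 in H0. apply H0. lra.
Qed.

Definition rr : R := 1/48.
Lemma rr_pos : 0 < rr. Proof. unfold rr; lra. Qed.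

Lemma ACadd r f g : 0 < r -> AC r f -> AC r g -> AC r (padd f g).
Proof. intros; apply (proj1 (AC_add r H f g H0 H1)). Qed.
Lemma ACmul r f g : 0 < r -> AC r f -> AC r g -> AC r (PS_mult f g).
Proof. intros; apply (proj1 (AC_mul r H f g H0 H1)). Qed.
Lemma ACsc r c f : AC r f -> AC r (psc c f).
Proof. intros; apply (proj1 (AC_sc r c f H)). Qed.
Lemma ACpow r f k : 0 < r -> AC r f -> AC r (ppow f k).
Proof. intros; apply (proj1 (AC_ppow r f k H H0)). Qed.

Section Delta.
Variables (nu : R) (dl : R).
Hypothesis Hnu : 0 < nu.
Hypothesis Hdl : 1/3 <= dl <= 1.

Definition dd := dl + dl ^ 3.
Definition u1 := (1 + 3 * dl ^ 2) / dd.
Definition u2 := 3 * dl / dd.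
Definition u3 := 1 / dd.
Definition UU : nat -> R :=
  padd (psc u1 pX) (padd (psc u2 (PS_mult pX pX)) (psc u3 (PS_mult pX (PS_mult pX pX)))).

Lemma dd_ge : 1/3 <= dd.
Proof. unfold dd. nra. Qed.

Lemma UU_AC : AC rr UU /\ nrm rr UU <= 1/2.
Proof.
  assert (Hr := rr_pos).
  destruct (AC_X rr) as [AX NX].
  destruct (AC_mul rr Hr pX pX AX AX) as [AX2 NX2].
  destruct (AC_mul rr Hr pX _ AX AX2) as [AX3 NX3].
  destruct (AC_sc rr u1 pX AX) as [A1 N1].
  destruct (AC_sc rr u2 _ AX2) as [A2 N2].
  destruct (AC_sc rr u3 _ AX3) as [A3 N3].
  destruct (AC_add rr Hr _ _ A2 A3) as [A23 N23].
  destruct (AC_add rr Hr _ _ A1 A23) as [A123 N123].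
  split. exact A123.
  assert (Hd := dd_ge).
  assert (Hu1 : Rabs u1 <= 12).
  { unfold u1. rewrite Rabs_pos_eq. apply Rmult_le_reg_r with dd. lra. unfold Rdiv.
    rewrite Rmult_assoc, Rinv_l by lra. unfold dd. nra. apply Rdiv_le_0_compat; nra. }
  assert (Hu2 : Rabs u2 <= 9).
  { unfold u2. rewrite Rabs_pos_eq. apply Rmult_le_reg_r with dd. lra. unfold Rdiv.
    rewrite Rmult_assoc, Rinv_l by lra. unfold dd. nra. apply Rdiv_le_0_compat; nra. }
  assert (Hu3 : Rabs u3 <= 3).
  { unfold u3. rewrite Rabs_pos_eq. apply Rmult_le_reg_r with dd. lra. unfold Rdiv.
    rewrite Rmult_1_l, Rinv_l by lra. lra. apply Rdiv_le_0_compat; nra. }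
  rewrite NX in NX2. rewrite NX in NX3.
  assert (0 <= nrm rr (PS_mult pX pX)) by (apply nrm_nonneg; auto).
  assert (nrm rr (PS_mult pX pX) <= rr * rr) by auto.
  assert (nrm rr (PS_mult pX (PS_mult pX pX)) <= rr * (rr * rr)).
  { eapply Rle_trans; [exact NX3|]. apply Rmult_le_compat_l; unfold rr in *; lra. }
  assert (0 <= nrm rr (PS_mult pX (PS_mult pX pX))) by (apply nrm_nonneg; auto).
  unfold UU. unfold rr in *.
  assert (Rabs u1 * nrm (1/48) pX <= 12 * (1/48)) by (rewrite NX; apply Rmult_le_compat_r; lra).
  assert (Rabs u2 * nrm (1/48) (PS_mult pX pX) <= 9 * (1/48 * (1/48))) by (apply Rmult_le_compat; try lra; apply Rabs_pos).
  assert (Rabs u3 * nrm (1/48) (PS_mult pX (PS_mult pX pX)) <= 3 * (1/48 * (1/48 * (1/48)))) by (apply Rmult_le_compat; try lra; apply Rabs_pos).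
  lra.
Qed.

Lemma UU_ev x : Rabs x < rr -> PSeries UU x = gfun (dl + x) nu / gfun dl nu - 1.
Proof.
  intros Hx. assert (Hr := rr_pos).
  destruct (AC_X rr) as [AX NX].
  destruct (AC_mul rr Hr pX pX AX AX) as [AX2 NX2].
  destruct (AC_mul rr Hr pX _ AX AX2) as [AX3 NX3].
  destruct (AC_sc rr u1 pX AX) as [A1 N1].
  destruct (AC_sc rr u2 _ AX2) as [A2 N2].
  destruct (AC_sc rr u3 _ AX3) as [A3 N3].
  destruct (AC_add rr Hr _ _ A2 A3) as [A23 N23].
  unfold UU. rewrite (ev_add rr) by (auto; lra). rewrite (ev_add rr) by (auto; lra).
  rewrite !ev_sc. rewrite (ev_mul rr Hr) by auto. rewrite (ev_mul rr Hr) by auto. rewrite (ev_mul rr Hr) by auto.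
  rewrite ev_X.
  assert (Hd := dd_ge).
  unfold gfun, u1, u2, u3, dd in *. field. repeat split; nra.
Qed.

Definition Fb (k : nat) : nat -> R := psc (bc (1/10) k) (ppow UU k).
Definition Bin : nat -> R := fun j => Series (fun k => Fb k j).

Lemma bc_le1 k : Rabs (bc (1/10) k) <= 1.
Proof. apply bc_bound. lra. Qed.

Lemma Fb_facts : (forall k, AC rr (Fb k)) /\ (forall k, nrm rr (Fb k) <= (1/2) ^ k).
Proof.
  assert (Hr := rr_pos). destruct UU_AC as [AU NU].
  split; intros k; destruct (AC_ppow rr UU k Hr AU) as [Ap Np];
    destruct (AC_sc rr (bc (1/10) k) _ Ap) as [As Ns]; auto.
  unfold Fb. rewrite Ns. 
  assert (0 <= nrm rr (ppow UU k)) by (apply nrm_nonneg; auto).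
  assert (nrm rr UU ^ k <= (1/2) ^ k).
  { apply pow_incr. split; auto. apply nrm_nonneg; auto. }
  assert (Hb := bc_le1 k). assert (Hb0 := Rabs_pos (bc (1/10) k)).
  assert (0 <= (1/2)^k) by (apply pow_le; lra). nra.
Qed.

Lemma Bin_facts : AC rr Bin /\ nrm rr Bin <= 2 /\
  forall x, Rabs x < rr -> PSeries Bin x = Rpower (gfun (dl + x) nu / gfun dl nu) (1/10).
Proof.
  assert (Hr := rr_pos). destruct Fb_facts as [AF NF]. destruct UU_AC as [AU NU].
  assert (Hg : ex_series (fun k => (1/2) ^ k)) by (apply ex_series_geom; rewrite Rabs_pos_eq; lra).
  assert (Hs : ex_series (fun n => nrm rr (Fb n))).
  { apply (ex_series_le_R _ (fun k => (1/2)^k)); auto. intros k. rewrite Rabs_pos_eq. apply NF.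
    apply nrm_nonneg; auto. }
  destruct (AC_sum rr Hr Fb AF Hs) as [H1 [H2 H3]].
  split. exact H1. split.
  { eapply Rle_trans. exact H2. 
    assert (Series (fun n => nrm rr (Fb n)) <= Series (fun k => (1/2)^k)).
    { apply Series_le; auto. intros k; split. apply nrm_nonneg; auto. auto. }
    rewrite Series_geom in H by (rewrite Rabs_pos_eq; lra). lra. }
  intros x Hx. unfold Bin. rewrite (is_pseries_unique _ _ _ (H3 x Hx)).
  assert (Hux : Rabs (PSeries UU x) <= 1/2).
  { eapply Rle_trans. apply (ev_bound rr). exact AU. lra. exact NU. }
  transitivity (PSeries (bc (1/10)) (PSeries UU x)).
  { unfold PSeries at 2. apply Series_ext. intros k. unfold Fb. rewrite ev_sc.
    rewrite (ev_ppow rr UU k x Hr AU Hx). reflexivity. }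
  rewrite binomial_series by (lra || (eapply Rle_lt_trans; [exact Hux| lra])).
  rewrite UU_ev by auto. f_equal. ring.
Qed.

Definition s0 := Rpower (gfun dl nu) (1/10).
Definition SS : nat -> R := psc s0 Bin.

Lemma SS_facts : AC rr SS /\ nrm rr SS <= 2 * s0 /\
  forall x, Rabs x < rr -> 0 < gfun (dl + x) nu /\ PSeries SS x = Rpower (gfun (dl + x) nu) (1/10).
Proof.
  assert (Hr := rr_pos). destruct Bin_facts as [AB [NB EB]].
  destruct (AC_sc rr s0 Bin AB) as [AS NS].
  assert (Hs0 : 0 < s0) by apply Rpower_pos.
  split; auto. split.
  { unfold SS. rewrite NS, Rabs_pos_eq by lra. nra. }
  intros x Hx.
  assert (Hg0 : 0 < gfun dl nu) by (apply gfun_pos; lra).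
  destruct UU_AC as [AU NU].
  assert (Hux : Rabs (PSeries UU x) <= 1/2) by (eapply Rle_trans; [apply (ev_bound rr); [exact AU|lra]| exact NU]).
  rewrite UU_ev in Hux by auto.
  assert (Hq : 0 < gfun (dl + x) nu / gfun dl nu).
  { assert (Hl := Rle_abs (- (gfun (dl + x) nu / gfun dl nu - 1))). rewrite Rabs_Ropp in Hl. lra. }
  assert (Hgx : 0 < gfun (dl + x) nu).
  { replace (gfun (dl + x) nu) with (gfun (dl + x) nu / gfun dl nu * gfun dl nu) by (field; lra). nra. }
  split; auto.
  unfold SS. rewrite ev_sc, EB by auto. unfold s0.
  rewrite Rpower_mult_distr by auto. f_equal. field. lra.
Qed.

Lemma SS_pow_ev k x : Rabs x < rr -> PSeries (ppow SS k) x = Rpower (gfun (dl + x) nu) (INR k / 10).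
Proof.
  intros Hx. destruct SS_facts as [AS [_ ES]]. destruct (ES x Hx) as [Hg E].
  rewrite (ev_ppow rr SS k x rr_pos AS Hx), E. rewrite Rpower_tenth; auto.
Qed.

Lemma apm_pow d y k : 0 < gfun d nu -> 2/5 * y = INR k / 10 ->
  Rpower (a_pm d nu) y = Rpower (gfun d nu) (INR k / 10).
Proof.
  intros Hg E. unfold a_pm. fold (gfun d nu). rewrite Rpower_mult. f_equal. exact E.
Qed.

Variables (x1 x2 : R).

Definition Ainit (n : nat) : nat -> R :=
  match n with
  | O => psc x1 (ppow SS 2)
  | 1%nat => psc (- (x1 + x2) / sqrt 2) (ppow SS 3)
  | 2%nat => psc (x2 / 2) (ppow SS 4)
  | _ => psc ((x1 - x2) / (6 * sqrt 2)) (ppow SS 5)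
  end.

Definition CA : nat -> (nat -> R) := coef pzero padd PS_mult psc (ppow SS 4) Ainit.

Lemma AC_clos : AC rr pzero /\ (forall f g, AC rr f -> AC rr g -> AC rr (padd f g)) /\ (forall f g, AC rr f -> AC rr g -> AC rr (PS_mult f g)) /\ (forall c f, AC rr f -> AC rr (psc c f)) /\ AC rr (ppow SS 4) /\ (forall n, (n < 4)%nat -> AC rr (Ainit n)).
Proof.
  assert (Hr := rr_pos). destruct SS_facts as [AS _].
  split. apply AC_zero. split. intros; apply ACadd; auto. split. intros; apply ACmul; auto.
  split. intros; apply ACsc; auto. split. apply ACpow; auto.
  intros n Hn. destruct n as [|[|[|n]]]; cbv beta iota delta [Ainit]; apply ACsc; apply ACpow; auto.
Qed.

Lemma CA_AC n : AC rr (CA n).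
Proof.
  destruct AC_clos as [A0 [A1 [A2 [A3 [A4 A5]]]]].
  apply (P_coef _ pzero padd PS_mult psc (ppow SS 4) Ainit (AC rr)); auto.
Qed.

Lemma CA_ev x n : Rabs x < rr -> PSeries (CA n) x = creal (a_pm (dl + x) nu) x1 x2 n.
Proof.
  intros Hx. assert (Hr := rr_pos).
  destruct AC_clos as [A0 [A1 [A2 [A3 [A4 A5]]]]].
  destruct SS_facts as [AS [_ ES]]. destruct (ES x Hx) as [Hg _].
  assert (Hs2 : 0 < sqrt 2) by (apply sqrt_lt_R0; lra).
  apply (hom_coef _ _ pzero padd PS_mult psc (ppow SS 4) Ainit 0 Rplus Rmult Rmult (a_pm (dl + x) nu)
           (initR (a_pm (dl + x) nu) x1 x2) (AC rr) (fun f => PSeries f x)); auto.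
  - apply ev_zero.
  - intros; apply (ev_add rr); auto; lra.
  - intros; apply (ev_mul rr); auto.
  - intros; apply ev_sc.
  - rewrite SS_pow_ev by auto. unfold a_pm. fold (gfun (dl + x) nu). f_equal. simpl; field.
  - intros m Hm. destruct m as [|[|[|[|m]]]]; try lia; cbv beta iota delta [Ainit]; rewrite ev_sc, SS_pow_ev by auto; unfold initR.
    + rewrite (apm_pow (dl + x) (1/2) 2) by (auto; simpl; field). ring.
    + rewrite (apm_pow (dl + x) (3/4) 3) by (auto; simpl; field). field. lra.
    + unfold a_pm. fold (gfun (dl + x) nu). replace (INR 4 / 10) with (2/5) by (simpl; field). field.
    + rewrite (apm_pow (dl + x) (5/4) 5) by (auto; simpl; field). field. lra.
Qed.

Lemma CA_bound al rho e0 K :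
  (forall (e : R) (m : nat -> R), 0 <= e <= e0 ->
    (forall n, 0 <= m n) -> (forall i, (i < 4)%nat -> m i <= e) ->
    (forall p, Pn p * m (p + 4)%nat <= S3 m p + al * m p + match p with O => 0 | S q => m q end) ->
    forall n, m n * rho ^ n <= K) ->
  0 <= e0 -> nrm rr (ppow SS 4) <= al ->
  (forall i, (i < 4)%nat -> nrm rr (Ainit i) <= e0) ->
  forall n, nrm rr (CA n) * rho ^ n <= K.
Proof.
  intros HK He0 Hal Hin n. assert (Hr := rr_pos).
  destruct AC_clos as [A0 [A1 [A2 [A3 [A4 A5]]]]].
  apply (HK e0 (fun n => nrm rr (CA n))); auto.
  - split; lra.
  - intros; apply nrm_nonneg; auto. apply CA_AC.
  - intros i Hi. unfold CA. rewrite coef_init by auto. apply Hin; auto.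
  - intros p. 
    assert (H := nu_rec _ pzero padd PS_mult psc (ppow SS 4) Ainit (AC rr) (nrm rr) A0 A1 A2 A3 A4 A5).
    assert (Hm := H ltac:(apply AC_zero)).
    assert (Hm2 := Hm ltac:(intros; apply AC_add; auto)).
    assert (Hm3 := Hm2 ltac:(intros; apply AC_mul; auto)).
    assert (Hm4 := Hm3 ltac:(intros; destruct (AC_sc rr c x H0) as [_ E]; rewrite E; lra)).
    assert (Hm5 := Hm4 ltac:(intros; apply nrm_nonneg; auto) p). simpl in Hm5.
    fold CA in Hm5. unfold S3. eapply Rle_trans. exact Hm5.
    apply Rplus_le_compat_r. apply Rplus_le_compat_l. apply Rmult_le_compat_r. apply nrm_nonneg; auto. apply CA_AC. auto.
Qed.
End Delta.

Lemma abs_le_norm x1 x2 k : sqrt (x1 ^ 2 + x2 ^ 2) <= k -> Rabs x1 <= k /\ Rabs x2 <= k.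
Proof.
  intros H. split.
  - rewrite <- sqrt_Rsqr_abs. eapply Rle_trans; [|exact H]. apply sqrt_le_1_alt. unfold Rsqr. nra.
  - rewrite <- sqrt_Rsqr_abs. eapply Rle_trans; [|exact H]. apply sqrt_le_1_alt. unfold Rsqr. nra.
Qed.

Theorem lemma12 (nu_m nu_p : R) (Hm : 0 < nu_m) (Hp : 0 < nu_p) :
  exists k1 : R, 0 < k1 /\
  exists A : R -> R -> R -> R -> R,   (* A delta x10 x20 z *)
    forall delta x10 x20 : R,
      1/3 <= delta <= 1 ->
      sqrt (x10 ^ 2 + x20 ^ 2) <= k1 ->
      solves_ODE_on (A delta x10 x20) (- a_pm delta nu_m) (a_pm delta nu_p) /\
      initial_data (A delta x10 x20) (a_pm delta nu_p) x10 x20 /\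
      (forall z : R, - a_pm delta nu_m <= z <= a_pm delta nu_p ->
         analytic_at (fun d => A d x10 x20 z) delta).
Proof.
  set (Gp := 1 / (4 * nu_p ^ 2)). set (Gm := 1 / (4 * nu_m ^ 2)).
  assert (HGp : 0 < Gp) by (unfold Gp; apply Rdiv_lt_0_compat; nra).
  assert (HGm : 0 < Gm) by (unfold Gm; apply Rdiv_lt_0_compat; nra).
  set (Q := 2 * (1 + Gp)).
  assert (HQ : 1 <= Q) by (unfold Q; lra).
  set (al := Q ^ 4).
  assert (Hal : 1 <= al) by (unfold al; apply pow_R1_Rle; lra).
  set (Z := 1 + Gm + Gp).
  set (R0 := 2 * Z + al + 1).
  set (rho := 2 * R0).
  assert (HR0 : 2 * Z + 1 < R0) by (unfold R0; lra).
  assert (HZ : 1 <= Z) by (unfold Z; lra).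
  destruct (rec_bound al rho) as [e0 [He0 [K HK]]]; [lra| unfold rho; lra |].
  assert (HQ5 : 0 < 2 * Q ^ 5) by (assert (0 < Q ^ 5) by (apply pow_lt; lra); lra).
  exists (e0 / (2 * Q ^ 5)). split. apply Rdiv_lt_0_compat; lra.
  exists (fun d x1 x2 z => PSeries (creal (a_pm d nu_p) x1 x2) (z - a_pm d nu_p)).
  intros dl x1 x2 Hdl Hk.
  destruct (abs_le_norm x1 x2 _ Hk) as [Hx1 Hx2].
  set (k1 := e0 / (2 * Q ^ 5)) in *.
  assert (Hk1 : 2 * k1 * Q ^ 5 = e0) by (unfold k1; field; lra).
  assert (Hr := rr_pos).
  destruct (SS_facts nu_p dl Hp Hdl) as [AS [NS ES]].
  assert (Hs0 : 2 * s0 nu_p dl <= Q).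
  { unfold s0, Q. assert (Rpower (gfun dl nu_p) (1/10) <= 1 + gfun dl nu_p).
    { apply Rpower_le_1plus. apply gfun_pos; lra. lra. }
    assert (gfun dl nu_p <= Gp) by (apply gfun_le; lra). lra. }
  assert (NSQ : nrm rr (SS nu_p dl) <= Q) by lra.
  assert (Npow : forall j, nrm rr (ppow (SS nu_p dl) j) <= Q ^ j).
  { intros j. destruct (AC_ppow rr _ j Hr AS) as [_ H]. eapply Rle_trans. exact H.
    apply pow_incr. split. apply nrm_nonneg; auto. auto. }
  assert (Hs2 : 1 <= sqrt 2).
  { rewrite <- sqrt_1. apply sqrt_le_1_alt. lra. }
  assert (Hs2' : 0 < sqrt 2) by lra.
  assert (HQj : forall j, (j <= 5)%nat -> Q ^ j <= Q ^ 5) by (intros; apply Rle_pow; auto).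
  assert (Hin : forall i, (i < 4)%nat -> nrm rr (Ainit nu_p dl x1 x2 i) <= e0).
  { intros i Hi. rewrite <- Hk1.
    assert (Hk0 : 0 <= k1) by (eapply Rle_trans; [apply Rabs_pos| exact Hx1]).
    destruct i as [|[|[|[|i]]]]; try lia; cbv beta iota delta [Ainit];
      rewrite (proj2 (AC_sc rr _ _ (ACpow rr _ _ Hr AS))).
    - assert (Q ^ 2 <= Q ^ 5) by (apply HQj; lia).
      assert (0 <= nrm rr (ppow (SS nu_p dl) 2)) by (apply nrm_nonneg; auto; apply ACpow; auto).
      assert (H2 := Npow 2%nat). apply Rle_trans with (k1 * Q ^ 5). 2: nra.
      apply Rmult_le_compat; auto. apply Rabs_pos. lra.
    - assert (Q ^ 3 <= Q ^ 5) by (apply HQj; lia).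
      assert (0 <= nrm rr (ppow (SS nu_p dl) 3)) by (apply nrm_nonneg; auto; apply ACpow; auto).
      assert (H2 := Npow 3%nat).
      assert (Rabs (- (x1 + x2) / sqrt 2) <= 2 * k1).
      { unfold Rdiv. rewrite Rabs_mult, Rabs_Ropp, Rabs_inv, (Rabs_pos_eq (sqrt 2)) by lra.
        assert (Rabs (x1 + x2) <= 2 * k1) by (eapply Rle_trans; [apply Rabs_triang| lra]).
        assert (/ sqrt 2 <= 1). { rewrite <- Rinv_1. apply Rinv_le_contravar; lra. }
        assert (0 <= / sqrt 2) by (left; apply Rinv_0_lt_compat; lra).
        assert (0 <= Rabs (x1 + x2)) by apply Rabs_pos. nra. }
      apply Rmult_le_compat; auto. apply Rabs_pos. lra.
    - assert (0 <= nrm rr (ppow (SS nu_p dl) 4)) by (apply nrm_nonneg; auto; apply ACpow; auto).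
      assert (H2 := Npow 4%nat). assert (Q ^ 4 <= Q ^ 5) by (apply HQj; lia).
      assert (Rabs (x2 / 2) <= 2 * k1).
      { unfold Rdiv. rewrite Rabs_mult, Rabs_inv, (Rabs_pos_eq 2) by lra. lra. }
      apply Rmult_le_compat; auto. apply Rabs_pos. lra.
    - assert (0 <= nrm rr (ppow (SS nu_p dl) 5)) by (apply nrm_nonneg; auto; apply ACpow; auto).
      assert (H2 := Npow 5%nat).
      assert (Rabs ((x1 - x2) / (6 * sqrt 2)) <= 2 * k1).
      { unfold Rdiv. rewrite Rabs_mult, Rabs_inv, (Rabs_pos_eq (6 * sqrt 2)) by lra.
        assert (Rabs (x1 - x2) <= 2 * k1).
        { unfold Rminus. eapply Rle_trans; [apply Rabs_triang|]. rewrite Rabs_Ropp. lra. }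
        assert (/ (6 * sqrt 2) <= 1). { rewrite <- Rinv_1. apply Rinv_le_contravar; lra. }
        assert (0 <= / (6 * sqrt 2)) by (left; apply Rinv_0_lt_compat; lra).
        assert (0 <= Rabs (x1 - x2)) by apply Rabs_pos. nra. }
      apply Rmult_le_compat; auto. apply Rabs_pos. }
  assert (CB := CA_bound nu_p dl Hp Hdl x1 x2 al rho e0 K HK ltac:(lra) (Npow 4%nat) Hin).
  assert (Hdl0 : 0 < dl <= 1) by lra.
  assert (Ha : 0 < a_pm dl nu_p) by (unfold a_pm; apply Rpower_pos).
  assert (HaZ : a_pm dl nu_p <= Z) by (pose proof (a_pm_le dl nu_p Hdl0 Hp); fold Gp in H; unfold Z; lra).
  assert (Ham : 0 < a_pm dl nu_m) by (unfold a_pm; apply Rpower_pos).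
  assert (HamZ : a_pm dl nu_m <= Z) by (pose proof (a_pm_le dl nu_m Hdl0 Hm); fold Gm in H; unfold Z; lra).
  set (c := creal (a_pm dl nu_p) x1 x2).
  assert (H00 : Rabs 0 < rr) by (rewrite Rabs_R0; exact rr_pos).
  assert (Hc : forall n, Rabs (c n) <= nrm rr (CA nu_p dl x1 x2 n)).
  { intros n. assert (E := CA_ev nu_p dl Hp Hdl x1 x2 0 n H00).
    rewrite Rplus_0_r in E. unfold c. rewrite <- E. apply (ev_bound rr). apply CA_AC; auto. lra. }
  set (R1 := 3/2 * R0).
  assert (HR1 : 2 * Z + 1 < R1) by (unfold R1; lra).
  assert (HAC : AC R1 c).
  { unfold AC. apply (ex_series_le_R _ (fun n => K * (3/4) ^ n)).
    - intros n. rewrite Rabs_pos_eq by (apply Rmult_le_pos; [apply Rabs_pos| apply pow_le; unfold R1; lra]).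
      replace R1 with (rho * (3/4)) by (unfold R1, rho; field). rewrite Rpow_mult_distr.
      rewrite <- Rmult_assoc. apply Rmult_le_compat_r. apply pow_le; lra.
      eapply Rle_trans; [|apply (CB n)]. apply Rmult_le_compat_r. apply pow_le; unfold rho; lra. apply Hc.
    - apply (ex_series_scal_l K (fun n => (3/4)^n)). apply ex_series_geom. rewrite Rabs_pos_eq; lra. }
  destruct (ode_lemma (a_pm dl nu_p) x1 x2 R1 ltac:(unfold R1; lra) HAC) as [E1 [E2 E3]].
  fold c in E1, E2, E3.
  split; [|split].
  - split.
    + exists 1. split. lra. intros z Hz k Hk4. apply E1. apply Rabs_def1; lra.
    + intros z Hz. apply E2. apply Rabs_def1; lra.
  - assert (Ci : forall i, (i < 4)%nat -> c i = initR (a_pm dl nu_p) x1 x2 i).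
    { intros i Hi. unfold c, creal. apply coef_init; auto. }
    unfold initial_data. split; [|split; [|split]].
    + rewrite Rminus_diag, PSeries_0, Ci by lia. reflexivity.
    + rewrite E3, Ci by lia. simpl Factorial.fact. unfold initR. simpl INR. ring.
    + rewrite E3, Ci by lia. simpl Factorial.fact. unfold initR. simpl INR. field; lra.
    + rewrite E3, Ci by lia. simpl Factorial.fact. unfold initR. simpl INR. field; lra.
  - intros z Hz.
    assert (Hzb : Rabs z <= Z) by (apply Rabs_le; lra).
    set (SSd := SS nu_p dl) in *.
    destruct (AC_const rr z) as [Az Nz].
    assert (AP4 := ACpow rr SSd 4 Hr AS).
    destruct (AC_sc rr (-1) _ AP4) as [AP4s NP4s].
    set (T := padd (pconst z) (psc (-1) (ppow SSd 4))).
    destruct (AC_add rr Hr _ _ Az AP4s) as [AT NT0]. fold T in AT, NT0.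
    assert (NT : nrm rr T <= R0).
    { rewrite Nz, NP4s in NT0. replace (Rabs (-1)) with 1 in NT0 by (rewrite Rabs_left; lra). assert (H4 := Npow 4%nat). fold SSd in H4.
      unfold R0, al. lra. }
    set (F := fun n => PS_mult (CA nu_p dl x1 x2 n) (ppow T n)).
    assert (ACn : forall n, AC rr (CA nu_p dl x1 x2 n)) by (intros; apply CA_AC; auto).
    assert (AF : forall n, AC rr (F n)) by (intros; apply ACmul; auto; apply ACpow; auto).
    assert (NF : forall n, nrm rr (F n) <= K * (1/2) ^ n).
    { intros n. destruct (AC_mul rr Hr _ _ (ACn n) (ACpow rr T n Hr AT)) as [_ H1].
      destruct (AC_ppow rr T n Hr AT) as [_ H2].
      eapply Rle_trans. exact H1.
      assert (0 <= nrm rr T) by (apply nrm_nonneg; auto).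
      assert (nrm rr T ^ n <= R0 ^ n) by (apply pow_incr; lra).
      assert (0 <= nrm rr (CA nu_p dl x1 x2 n)) by (apply nrm_nonneg; auto).
      apply Rle_trans with (nrm rr (CA nu_p dl x1 x2 n) * R0 ^ n).
      apply Rmult_le_compat_l; auto. lra.
      replace R0 with (rho * (1/2)) by (unfold rho; field). rewrite Rpow_mult_distr, <- Rmult_assoc.
      apply Rmult_le_compat_r. apply pow_le; lra. apply CB. }
    assert (HsF : ex_series (fun n => nrm rr (F n))).
    { apply (ex_series_le_R _ (fun n => K * (1/2) ^ n)).
      intros n. rewrite Rabs_pos_eq by (apply nrm_nonneg; auto). apply NF.
      apply (ex_series_scal_l K (fun n => (1/2)^n)). apply ex_series_geom. rewrite Rabs_pos_eq; lra. }
    destruct (AC_sum rr Hr F AF HsF) as [_ [_ H3]].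
    unfold analytic_at. exists rr. split. exact Hr. exists (fun k => Series (fun n => F n k)).
    intros y Hy. assert (E := H3 (y - dl) Hy).
    replace (PSeries (creal (a_pm y nu_p) x1 x2) (z - a_pm y nu_p)) with (Series (fun n => PSeries (F n) (y - dl))).
    exact E.
    unfold PSeries at 2. apply Series_ext. intros n. unfold F.
    rewrite (ev_mul rr Hr) by (auto; apply ACpow; auto).
    rewrite (CA_ev nu_p dl Hp Hdl x1 x2 (y - dl) n Hy).
    rewrite (ev_ppow rr T n (y - dl) Hr AT Hy).
    replace (dl + (y - dl)) with y by ring. f_equal. f_equal.
    unfold T. rewrite (ev_add rr) by (auto; lra). rewrite ev_const, ev_sc.
    unfold SSd. rewrite (SS_pow_ev nu_p dl Hp Hdl 4 (y - dl) Hy).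
    replace (dl + (y - dl)) with y by ring.
    unfold a_pm. fold (gfun y nu_p). replace (INR 4 / 10) with (2/5) by (simpl; field). ring.
Qed.
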